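(* Let $\Omega$ be a finite set and let $u,v \in \mathrm{Sym}(\Omega)$. Let $\Phi\subseteq \mathrm{fix}([u,v]) \cap \mathrm{supp}(u)$ and $\Psi \subseteq \mathrm{supp}(v u v^{-1})\cap \mathrm{supp}(u)$. Then $$|\mathrm{supp}([u,v])| \le 2|\mathrm{supp}(u)| - |\Phi| - |\Psi|.$$
   Context: Permutations act on the right, written $\alpha^{u}$, and products are composed left to right: $\alpha^{uv}=(\alpha^u)^v$. The commutator is $[u,v] = uvu^{-1}v^{-1}$. For a permutation $x$, $\mathrm{supp}(x)=\{\alpha\in\Omega \mid \alpha^x\neq\alpha\}$ and $\mathrm{fix}(x)=\{\alpha\in\Omega\mid \alpha^x=\alpha\}$. *)

(* Defs.v *)
From mathcomp Require Import all_boot all_order all_algebra all_fingroup.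
Set Implicit Arguments. Unset Strict Implicit. Unset Printing Implicit Defensive.

(* MathComp permutations compose left to right: (s * t) x = t (s x)  (permM),
   matching the paper's right-action convention alpha^(uv) = (alpha^u)^v. *)

Definition supp (T : finType) (x : {perm T}) : {set T} := [set a | x a != a].
Definition fixp (T : finType) (x : {perm T}) : {set T} := [set a | x a == a].
(* the paper's commutator [u,v] = u v u^-1 v^-1 (NOT mathcomp's [~ u, v]) *)
Definition pcomm (T : finType) (u v : {perm T}) : {perm T} :=
  (u * v * u^-1 * v^-1)%g.

(* Main.v *)
Require Import Defs.
From mathcomp Require Import all_boot all_order all_algebra all_fingroup.
From mathcomp Require Import zify.
Import GRing.Theory.
Local Open Scope ring_scope.

Lemma main_nat (T : finType) (u v : {perm T}) (Phi Psi : {set T}) :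
  Phi \subset fixp (pcomm u v) :&: supp u ->
  Psi \subset supp (v * u * v^-1)%g :&: supp u ->
  (#|supp (pcomm u v)| + #|Phi| + #|Psi| <= 2 * #|supp u|)%N.
Proof.
move=> HPhi HPsi.
set S := supp (v * u * v^-1)%g.
have cS : #|S| = #|supp u|.
  have -> : S = v @^-1: supp u.
    apply/setP => a; rewrite !inE !permM.
    apply/idP/idP; apply: contra => /eqP H.
      by rewrite H permK.
    by rewrite -{2}H permKV.
  by apply: card_preimset; apply: perm_inj.
have H1 : supp (pcomm u v) :|: Phi \subset supp u :|: S.
  apply/subsetP => a; rewrite !inE => /orP [|HP].
    apply: contraR; rewrite negb_or !negbK => /andP [/eqP Hu /eqP Hw].
    rewrite /pcomm !permM Hu.
    rewrite !permM in Hw.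
    have Hv : u (v a) = v a by rewrite -{2}Hw permKV.
    by rewrite -{1}Hv !permK.
  have := subsetP HPhi a HP; rewrite !inE; by case/andP => _ ->.
have H2 : supp (pcomm u v) :&: Phi = set0.
  apply/setP => a; rewrite !inE.
  case: (boolP (a \in Phi)) => HP; last by rewrite andbF.
  have := subsetP HPhi a HP; rewrite !inE; by case/andP => ->.
have c1 := cardsUI (supp (pcomm u v)) Phi.
rewrite H2 cards0 addn0 in c1.
have c2 := cardsUI (supp u) S.
have l1 := subset_leq_card H1.
have l2 : (#|Psi| <= #|supp u :&: S|)%N.
  by apply: subset_leq_card; rewrite setIC.
lia.
Qed.

Theorem lemma2p1 (T : finType) (u v : {perm T}) (Phi Psi : {set T}) :
  Phi \subset fixp (pcomm u v) :&: supp u ->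
  Psi \subset supp (v * u * v^-1)%g :&: supp u ->
  (#|supp (pcomm u v)|%:Z <= 2 * #|supp u|%:Z - #|Phi|%:Z - #|Psi|%:Z)%R.
Proof.
move=> HPhi HPsi.
have := @main_nat T u v Phi Psi HPhi HPsi.
lia.
Qed.
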